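(* Let $d\geq 0$ and $i>0$ be integers, and let $h(t)$ be a polynomial with rational coefficients of degree at most $d+1$ that is symmetric about $\frac{d+1}{2}$, i.e. $h(t)=t^{d+1}h(1/t)$. If $g^{(d,i)}(h(t))\geq 0$ componentwise, then $g^{(d,i+1)}(h(t))\geq 0$ componentwise.
   Context: For integers $d\geq 0$ and $i>0$, let $q\geq 0$, $1\leq r\leq i$ be the unique integers with $d+1=qi+r$ and define $P_{d,i}(t)=(1+t+\cdots+t^i)^q(1+t+\cdots+t^r)$; also set $P_{-1,i}(t)=1$. Let $B_{d,i}$ be the ordered list $\big(P_{d,i}(t),\ tP_{d-2,i}(t),\ t^2P_{d-4,i}(t),\ldots,\ t^{\lfloor (d+1)/2\rfloor}P_{d-2\lfloor (d+1)/2\rfloor,i}(t)\big)$, which is a basis of the $\mathbb{Q}$-vector space of polynomials of degree at most $d+1$ satisfying $h(t)=t^{d+1}h(1/t)$. For such $h$, $g^{(d,i)}(h(t))=(g_0,\ldots,g_{\lfloor (d+1)/2\rfloor})$ is the vector of coefficients of $h$ in the basis $B_{d,i}$, i.e. $h(t)=\sum_j g_j t^jP_{d-2j,i}(t)$. *)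

(* Defs.v *)
From HB Require Import structures.
From mathcomp Require Import all_boot all_order all_algebra.
Set Implicit Arguments. Unset Strict Implicit. Unset Printing Implicit Defensive.
Import Order.TTheory GRing.Theory Num.Theory.
Local Open Scope ring_scope.

Definition geomP (k : nat) : {poly rat} := \sum_(0 <= m < k.+1) 'X^m.

(* Pn n i = P_{n-1,i}(t).  For n = d+1 >= 1 write n = q*i + r with 1 <= r <= i,
   i.e. q = (n-1) %/ i, r = (n-1) %% i + 1; Pn 0 i = P_{-1,i} = 1. *)
Definition Pn (n i : nat) : {poly rat} :=
  if n is n'.+1 then geomP i ^+ (n' %/ i) * geomP (n' %% i).+1 else 1.

(* P_{d,i}, for d >= -1 encoded as d+1 *)
Definition P (d i : nat) : {poly rat} := Pn d.+1 i.

Definition in_basis (d i : nat) (g : nat -> rat) : {poly rat} :=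
  \sum_(0 <= j < (d.+1)./2.+1) (g j)%:P * 'X^j * Pn (d.+1 - j.*2)%N i.

Definition sym_poly (d : nat) (h : {poly rat}) : Prop :=
  (size h <= d.+2)%N /\ forall k : nat, (k <= d.+1)%N -> h`_k = h`_(d.+1 - k).

Definition nonneg_coeffs (d : nat) (g : nat -> rat) : Prop :=
  forall j : nat, (j <= (d.+1)./2)%N -> 0 <= g j.

(* Main.v *)
Require Import Defs.
From HB Require Import structures.
From mathcomp Require Import all_boot all_order all_algebra.
From Stdlib Require Import Lia.
Import Order.TTheory GRing.Theory Num.Theory.
Local Open Scope ring_scope.

Ltac nlia := rewrite -?mul2n; repeat match goal with H : is_true (leq _ _) |- _ => move: H => /ssrnat.leP H end;
  try apply/ssrnat.leP; unfold addn, subn, muln, addn_rec, subn_rec, muln_rec, double in *;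
  first [lia | nia | (match goal with |- ?g => idtac "FAIL" g end; try (match reverse goal with H : ?t |- _ => idtac H ":" t; fail end); fail)].

Notation G := geomP.

Lemma G0 : G 0 = 1.
Proof. by rewrite /geomP big_nat1 expr0. Qed.

Lemma GS k : G k.+1 = G k + 'X^(k.+1).
Proof. by rewrite /geomP big_nat_recr. Qed.

Lemma G_split b c : G (b + c).+1 = G b + 'X^(b.+1) * G c.
Proof.
elim: c => [|c IH]; first by rewrite addn0 G0 mulr1 GS.
rewrite addnS GS IH GS mulrDr -exprD -addrA.
by have -> : ((b + c).+2 = b.+1 + c.+1)%N by rewrite addnS addSn.
Qed.

Lemma G_rec a b : G a.+1 * G b.+1 = 'X * (G a * G b) + G (a + b).+2.
Proof.
have h1 : G a.+1 = 1 + 'X * G a by rewrite -(add0n a) G_split G0 add0n.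
have h2 : G (a + b).+2 = G b + 'X^(b.+1) * (1 + 'X * G a).
  by rewrite -h1 -G_split addnC addnS.
rewrite h1 GS h2 !mulrDl !mulrDr !mul1r !mulr1.
rewrite (mulrC ('X * G a) 'X^(b.+1)) mulrA [RHS]addrC -!addrA.
by rewrite (addrC ('X^(b.+1) * ('X * G a))).
Qed.

Lemma G_L v x y :
  G (x + v.+1) * G (y + v.+1) = G (x + y + v.+2) * G v + 'X^(v.+1) * (G x * G y).
Proof.
elim: v => [|v IH].
  by rewrite !addn1 G_rec G0 mulr1 expr1 addrC addn2.
rewrite [(x + v.+2)%N]addnS [(y + v.+2)%N]addnS G_rec IH.
have -> : (x + y + v.+3 = (x + y + v.+2).+1)%N by nlia.
rewrite G_rec mulrDr (mulrA 'X 'X^(v.+1)) -exprS addrAC.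
have -> : ((x + v.+1 + (y + v.+1)).+2 = (x + y + v.+2 + v).+2)%N by nlia.
done.
Qed.

Lemma Pn_eq s m : (0 < s)%N -> Pn m s = G s ^+ (m %/ s) * G (m %% s).
Proof.
move=> s0; case: m => [|n]; first by rewrite /Pn div0n mod0n expr0 G0 mulr1.
rewrite /Pn; set q := (n %/ s)%N; set c := (n %% s)%N.
have -> : (n.+1 = q * s + c.+1)%N by rewrite addnS /q /c -divn_eq.
rewrite divnMDl // modnMDl.
have : (c.+1 <= s)%N by rewrite /c ltn_pmod.
rewrite leq_eqVlt => /orP [/eqP -> | lt].
  by rewrite divnn s0 modnn G0 mulr1 exprD expr1.
by rewrite divn_small // modn_small // addn0.
Qed.

Lemma PnE s q c : (0 < s)%N -> (c <= s)%N -> Pn (q * s + c) s = G s ^+ q * G c.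
Proof.
move=> s0 cs; rewrite Pn_eq // divnMDl // modnMDl.
move: cs; rewrite leq_eqVlt => /orP [/eqP -> | lt].
  by rewrite divnn s0 modnn G0 mulr1 exprD expr1.
by rewrite divn_small // modn_small // addn0.
Qed.

Inductive cone (n s : nat) : {poly rat} -> Prop :=
| cone0 : cone n s 0
| coneD p q : cone n s p -> cone n s q -> cone n s (p + q)
| coneG (c : rat) (j m : nat) : 0 <= c -> (m + j.*2)%N = n ->
    cone n s (c%:P * 'X^j * Pn m s).

Lemma cone_Pn n s : cone n s (Pn n s).
Proof.
have := @coneG n s 1 0 n ler01 (addn0 n).
by rewrite polyC1 mul1r expr0 mul1r.
Qed.

Lemma cone_eqn n n' s p : n = n' -> cone n s p -> cone n' s p.
Proof. by move=> ->. Qed.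
Lemma cone_eqn' {n n' s p} : cone n s p -> n = n' -> cone n' s p.
Proof. by move=> h <-. Qed.

Lemma cone_shift n s p k : cone n s p -> cone (n + k.*2) s ('X^k * p).
Proof.
elim=> [|p1 p2 _ h1 _ h2|c j m hc hn].
- by rewrite mulr0; apply: cone0.
- by rewrite mulrDr; apply: coneD.
- rewrite mulrA (mulrCA 'X^k) -exprD; apply: coneG => //; rewrite -hn; nlia.
Qed.

Lemma cone_scale n s p c : 0 <= c -> cone n s p -> cone n s (c%:P * p).
Proof.
move=> hc; elim=> [|p1 p2 _ h1 _ h2|c' j m hc' hn].
- by rewrite mulr0; apply: cone0.
- by rewrite mulrDr; apply: coneD.
- by rewrite !mulrA -polyCM; apply: coneG => //; apply: mulr_ge0.
Qed.

Lemma cone_GG s : (0 < s)%N -> forall N r a q, (r + a <= N)%N -> (r <= s)%N -> (a <= s)%N ->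
  cone (q * s + (r + a)) s (G s ^+ q * (G r * G a)).
Proof.
move=> s0.
have gen : forall q c, (c <= s)%N -> cone (q * s + c) s (G s ^+ q * G c).
  by move=> q c cs; rewrite -PnE //; apply: cone_Pn.
elim=> [|N IH] r a q hN hr ha.
  case: (posnP r) => [-> | r0]; first by rewrite G0 mul1r add0n; apply: gen.
  exfalso; nlia.
case: (posnP r) => [-> | r0]; first by rewrite G0 mul1r add0n; apply: gen.
case: (posnP a) => [-> | a0]; first by rewrite G0 mulr1 addn0; apply: gen.
case: (eqVneq r s) => [-> | rs].
  rewrite mulrA -exprSr; apply: (cone_eqn' (gen q.+1 a ha)); nlia.
case: (eqVneq a s) => [-> | as_].
  rewrite (mulrC (G r)) mulrA -exprSr; apply: (cone_eqn' (gen q.+1 r hr)); nlia.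
have hr' : (r < s)%N by rewrite ltn_neqAle rs.
have ha' : (a < s)%N by rewrite ltn_neqAle as_.
case: (leqP (r + a) s) => hra.
  case: r r0 hr hr' rs hN hra => // r' _ hr hr' rs hN hra.
  case: a a0 ha ha' as_ hN hra => // a' _ ha ha' as_ hN hra.
  rewrite G_rec mulrDr; apply: coneD.
    rewrite mulrCA; apply: (@cone_eqn (q * s + (r' + a') + 1.*2)); first nlia.
    rewrite -[X in cone _ _ (X * _)]expr1; apply: cone_shift; apply: IH; nlia.
  apply: (cone_eqn' (gen q (r' + a').+2 _)); nlia.
have := G_L (r + a - s) (s - a - 1) (s - r - 1).
have -> : (s - a - 1 + (r + a - s).+1 = r)%N by nlia.
have -> : (s - r - 1 + (r + a - s).+1 = a)%N by nlia.
have -> : (s - a - 1 + (s - r - 1) + (r + a - s).+2 = s)%N by nlia.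
move=> ->; rewrite mulrDr; apply: coneD.
  rewrite mulrA -exprSr; apply: (cone_eqn' (gen q.+1 (r + a - s)%N _)); nlia.
rewrite mulrCA; apply: (@cone_eqn (q * s + (s - a - 1 + (s - r - 1)) + (r + a - s).+1.*2)%N).
  nlia.
apply: cone_shift; apply: IH; nlia.
Qed.

Lemma cone_mulG n s p a : (0 < s)%N -> (a <= s)%N -> cone n s p -> cone (n + a) s (p * G a).
Proof.
move=> s0 hs; elim=> [|p1 p2 _ h1 _ h2|c j m hc hn].
- by rewrite mul0r; apply: cone0.
- by rewrite mulrDl; apply: coneD.
- rewrite Pn_eq // -!mulrA; apply: cone_scale => //.
  apply: (@cone_eqn ((m %/ s) * s + (m %% s + a) + j.*2)%N).
    by rewrite addnA -divn_eq -hn addnAC.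
  apply: cone_shift; apply: (@cone_GG s s0 _ _ _ _ (leqnn _)) => //.
  exact: (ssrnat.ltnW (ltn_pmod _ s0)).
Qed.

Lemma cone_Gpow s i q : (0 < s)%N -> (i <= s)%N -> cone (q * i) s (G i ^+ q).
Proof.
move=> s0 hi; elim: q => [|q IH]; first by rewrite expr0 mul0n; apply: (cone_Pn 0).
rewrite exprSr mulSnr; exact: cone_mulG.
Qed.

Lemma cone_lower n i : (0 < i)%N -> cone n i.+1 (Pn n i).
Proof.
move=> i0; rewrite Pn_eq //.
apply: (@cone_eqn (n %/ i * i + n %% i)%N); first by rewrite -divn_eq.
apply: cone_mulG => //; first exact: (leq_trans (ssrnat.ltnW (ltn_pmod n i0)) (leqnSn i)).
by apply: cone_Gpow.
Qed.

Lemma cone_repr n s p : cone n s p -> exists c : nat -> rat, (forall j, 0 <= c j) /\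
  p = \sum_(0 <= j < n./2.+1) (c j)%:P * 'X^j * Pn (n - j.*2) s.
Proof.
elim=> [|p1 p2 _ [c1 [h1 e1]] _ [c2 [h2 e2]]|c j m hc hn].
- exists (fun _ => 0); split=> // ; rewrite big1 // => j _; by rewrite polyC0 !mul0r.
- exists (fun j => c1 j + c2 j); split; first by move=> j; apply: addr_ge0.
  rewrite e1 e2 -big_split; apply: eq_bigr => j _; by rewrite polyCD !mulrDl.
- exists (fun k => if k == j then c else 0); split.
    by move=> k; case: ifP.
  have hj : (j < n./2.+1)%N by rewrite ltnS geq_half_double -hn leq_addl.
  rewrite big_mkord (bigD1 (Ordinal hj)) //= eqxx big1 ?addr0.
    by have -> : (n - j.*2 = m)%N by rewrite -hn addnK.
  move=> k hk; have hk' : (nat_of_ord k == j) = false by apply: negbTE; exact: hk.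
  by rewrite hk' polyC0 !mul0r.
Qed.

Lemma G_coef0 k : (G k)`_0 = 1.
Proof.
case: k => [|k]; first by rewrite G0 coef1.
by rewrite -(add0n k) G_split G0 coefD coef1 /= coefXnM /= addr0.
Qed.

Lemma Pn_coef0 n s : (Pn n s)`_0 = 1.
Proof.
case: n => [|n]; first by rewrite /Pn coef1.
rewrite /Pn coef0M G_coef0 mulr1.
elim: (n %/ s)%N => [|q IH]; first by rewrite expr0 coef1.
by rewrite exprS coef0M G_coef0 mul1r.
Qed.

Lemma sum_zero N (e : nat -> rat) (Q : nat -> {poly rat}) :
  (forall j, (Q j)`_0 = 1) ->
  \sum_(0 <= j < N) (e j)%:P * 'X^j * Q j = 0 -> forall j, (j < N)%N -> e j = 0.
Proof.
elim: N e Q => [|N IH] e Q hQ hs j hj; first by [].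
rewrite big_nat_recl // in hs.
have hsum : \sum_(0 <= k < N) (e k.+1)%:P * 'X^(k.+1) * Q k.+1
    = 'X * \sum_(0 <= k < N) (e k.+1)%:P * 'X^k * Q k.+1.
  rewrite mulr_sumr; apply: eq_bigr => k _; by rewrite exprS !mulrA (mulrC 'X).
rewrite hsum in hs.
have h0 : e 0%N = 0.
  have := congr1 (fun p : {poly rat} => p`_0) hs.
  by rewrite /= coefD coefXM /= expr0 mulr1 coefCM hQ mulr1 addr0 coef0.
case: j hj => [|j] hj; first exact: h0.
move: hs; rewrite h0 polyC0 !mul0r add0r => /eqP; rewrite mulf_eq0 polyX_eq0 /= => /eqP hS.
exact: (IH (fun k => e k.+1) (fun k => Q k.+1)).
Qed.

Theorem proposition1p2 (d i : nat) (h : {poly rat}) :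
  (0 < i)%N -> sym_poly d h ->
  (exists g : nat -> rat, h = in_basis d i g /\ nonneg_coeffs d g) ->
  (exists g' : nat -> rat, h = in_basis d i.+1 g' /\ nonneg_coeffs d g') /\
  (forall g' : nat -> rat, h = in_basis d i.+1 g' -> nonneg_coeffs d g').
Proof.
move=> i0 _ [g [hh hg]].
have hc : cone d.+1 i.+1 h.
  rewrite hh /in_basis big_mkord.
  elim/big_rec: _ => [|j x _ hx]; first exact: cone0.
  apply: coneD => //.
  have hj : (j <= (d.+1)./2)%N by rewrite -ltnS ltn_ord.
  rewrite -mulrA; apply: cone_scale; first exact: hg.
  apply: (@cone_eqn (d.+1 - j.*2 + j.*2)%N).
    by rewrite subnK // -geq_half_double.
  by apply: cone_shift; apply: cone_lower.
have [c [hc0 hce]] := cone_repr _ _ _ hc.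
split; first by exists c; split.
move=> g' hg' j hj.
have -> : g' j = c j.
  apply/eqP; rewrite -subr_eq0; apply/eqP.
  apply: (@sum_zero ((d.+1)./2.+1) (fun j => g' j - c j)
            (fun j => Pn (d.+1 - j.*2) i.+1)) => //.
    by move=> k; apply: Pn_coef0.
  rewrite (eq_bigr (fun k => (g' k)%:P * 'X^k * Pn (d.+1 - k.*2) i.+1 -
                               (c k)%:P * 'X^k * Pn (d.+1 - k.*2) i.+1)).
    by rewrite sumrB -hce; rewrite /in_basis in hg'; rewrite -hg' subrr.
  by move=> k _; rewrite polyCB !mulrBl.
exact: hc0.
Qed.
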